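(* Let $G$ be a countable group. Then: (1) If $\mu$ is a finitely additive left-invariant mean on $G$ with $\textup{dc}_\mu(G)=0$ then $\textup{dc}_{\mu'}(G)=0$ for every finitely additive left-invariant mean $\mu'$ on $G$. (2) If $\alpha>\frac{1}{2}$, and there is either a finitely additive left-invariant mean $\mu$ on $G$ with $\textup{dc}_\mu(G)=\alpha$ or a sequence $M$ of probability measures on $G$ that measures index uniformly with $\textup{dc}_M(G)=\alpha$, then $\textup{dc}_{\mu'}(G)=\alpha$ for every finitely additive left-invariant mean $\mu'$ on $G$ and $\textup{dc}_{M'}(G)=\alpha$ for every sequence $M'$ of probability measures on $G$ that measures index uniformly; moreover the $\limsup$ in the definition of $\textup{dc}_{M'}(G)$ is actually a limit.
   Context: A finitely additive left-invariant mean is a positive normalised left-invariant linear functional on $\ell^\infty(G)$, $\mu(X)=\int1_X\,d\mu$, and $\textup{dc}_\mu(G)=\int_x\int_y1_{\{xy=yx\}}\,d\mu(x)\,d\mu(y)$. A sequence $M=(\mu_n)$ of probability measures measures index uniformly if $\mu_n(xH)\to1/[G:H]$ uniformly over $x\in G$ and subgroups $H$ (with $1/[G:H]=0$ for infinite index); $\textup{dc}_M(G)=\limsup_n(\mu_n\times\mu_n)(\{(x,y):xy=yx\})$. *)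

(* Defs.v *)
From HB Require Import structures.
From mathcomp Require Import all_boot all_order all_algebra.
From mathcomp Require Import all_classical all_reals all_analysis.
From mathcomp Require Import finmap.
Set Implicit Arguments. Unset Strict Implicit. Unset Printing Implicit Defensive.
Import Order.TTheory GRing.Theory Num.Theory.
Local Open Scope classical_set_scope.
Local Open Scope ring_scope.

Section Defs.
Variables (G : choiceType) (mul : G -> G -> G) (inv : G -> G) (one : G).

Definition is_group : Prop :=
  [/\ forall x y z, mul x (mul y z) = mul (mul x y) z,
      forall x, mul one x = x &
      forall x, mul (inv x) x = one].

Definition is_subgroup (H : set G) : Prop :=
  [/\ H one, forall x y, H x -> H y -> H (mul x y) & forall x, H x -> H (inv x)].

Definition lcoset (x : G) (H : set G) : set G := [set mul x h | h in H].

Definition lcosets (H : set G) : set (set G) := [set lcoset x H | x in [set: G]].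

Variable R : realType.

(* 1/[G:H], with the convention 1/[G:H] = 0 when the index is infinite *)
Definition inv_index (H : set G) : R :=
  if `[< finite_set (lcosets H) >] then (#|` fset_set (lcosets H)|%:R)^-1 else 0.

Definition bounded_fun (f : G -> R) : Prop := exists C : R, forall x, `|f x| <= C.

(* finitely additive left-invariant mean: a positive normalised left-invariant
   linear functional on l^oo(G) (its values on unbounded functions are irrelevant) *)
Definition is_left_invariant_mean (m : (G -> R) -> R) : Prop :=
  [/\ forall (f g : G -> R) (a b : R), bounded_fun f -> bounded_fun g ->
        m (fun x => a * f x + b * g x) = a * m f + b * m g,
      forall f, bounded_fun f -> (forall x, 0 <= f x) -> 0 <= m f,
      m (fun _ => 1) = 1 &
      forall (f : G -> R) (g : G), bounded_fun f -> m (fun x => f (mul g x)) = m f].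

Definition dc_mean (m : (G -> R) -> R) : R :=
  m (fun x => m (fun y => if `[< mul x y = mul y x >] then 1 else 0)).

(* probability measures on the countable set G, given by their mass functions *)
Definition is_prob (p : G -> R) : Prop :=
  (forall x, 0 <= p x) /\ (\esum_(x in [set: G]) (p x)%:E = 1)%E.

Definition pmeas (p : G -> R) (A : set G) : \bar R := \esum_(x in A) (p x)%:E.

Definition measures_index_uniformly (M : nat -> G -> R) : Prop :=
  (forall n, is_prob (M n)) /\
  forall e : R, 0 < e -> \forall n \near \oo,
    forall (x : G) (H : set G), is_subgroup H ->
      `| fine (pmeas (M n) (lcoset x H)) - inv_index H | < e.

Definition comm_mass (M : nat -> G -> R) (n : nat) : \bar R :=
  \esum_(z in [set z : G * G | mul z.1 z.2 = mul z.2 z.1]) (M n z.1 * M n z.2)%:E.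

Definition dc_seq (M : nat -> G -> R) : \bar R := limn_esup (comm_mass M).

End Defs.

(* Main.v *)
Require Import Defs.
From HB Require Import structures.
From mathcomp Require Import all_boot all_order all_algebra.
From mathcomp Require Import all_classical all_reals all_analysis.
From mathcomp Require Import finmap.
From mathcomp Require Import ring lra.
Import Order.TTheory GRing.Theory Num.Theory.
Local Open Scope classical_set_scope.
Local Open Scope ring_scope.
Set Implicit Arguments. Unset Strict Implicit.

Section Grp.
Variables (R : realType) (G : choiceType) (mul : G -> G -> G) (inv : G -> G) (one : G).
Hypothesis hG : is_group mul inv one.

Lemma mulA x y z : mul x (mul y z) = mul (mul x y) z.
Proof. by case: hG. Qed.
Lemma mul1g x : mul one x = x.
Proof. by case: hG. Qed.
Lemma mulVg x : mul (inv x) x = one.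
Proof. by case: hG. Qed.
Lemma mulgV x : mul x (inv x) = one.
Proof.
rewrite -[LHS]mul1g -[X in mul X _](mulVg (inv x)) -mulA (mulA (inv x)) mulVg mul1g.
exact: mulVg.
Qed.
Lemma mulg1 x : mul x one = x.
Proof. by rewrite -(mulVg x) mulA mulgV mul1g. Qed.
Lemma mulKg x y : mul (inv x) (mul x y) = y.
Proof. by rewrite mulA mulVg mul1g. Qed.
Lemma mulKVg x y : mul x (mul (inv x) y) = y.
Proof. by rewrite mulA mulgV mul1g. Qed.
Lemma mulgK x y : mul (mul y x) (inv x) = y.
Proof. by rewrite -mulA mulgV mulg1. Qed.
Lemma mulgI x y z : mul x y = mul x z -> y = z.
Proof. by move=> e; rewrite -(mulKg x y) e mulKg. Qed.
Lemma mulIg x y z : mul y x = mul z x -> y = z.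
Proof. by move=> e; rewrite -(mulgK x y) e mulgK. Qed.
Lemma invK x : inv (inv x) = x.
Proof. by apply: (@mulgI (inv x)); rewrite mulgV mulVg. Qed.
Lemma invM x y : inv (mul x y) = mul (inv y) (inv x).
Proof.
apply: (@mulgI (mul x y)); rewrite mulgV -mulA (mulA y) mulgV mul1g mulgV //.
Qed.

Definition cent x : set G := [set y | mul x y = mul y x].
Definition ctr : set G := [set z | forall y, mul z y = mul y z].

Lemma cent_sub x : is_subgroup mul inv one (cent x).
Proof.
split; rewrite /cent /=.
- by rewrite mulg1 mul1g.
- by move=> y z hy hz; rewrite mulA hy -mulA hz mulA.
- move=> y hy; apply: (@mulgI y); rewrite mulKVg mulA -hy mulgK //.
Qed.

Lemma ctr_sub : is_subgroup mul inv one ctr.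
Proof.
split; rewrite /ctr /=.
- by move=> y; rewrite mulg1 mul1g.
- by move=> y z hy hz w; rewrite -mulA hz mulA hy mulA.
- move=> y hy w; apply: (@mulgI y); rewrite mulKVg mulA hy mulgK //.
Qed.

Lemma ctr_cent z x : ctr z -> cent x z.
Proof. by move=> hz; rewrite /cent /= hz. Qed.

Lemma cent_ctr x : ctr x -> cent x = setT.
Proof. by move=> hx; apply/seteqP; split=> // y _; rewrite /cent /= hx. Qed.

Lemma centM x z : ctr z -> cent (mul x z) = cent x.
Proof.
move=> hz; apply/seteqP; split=> y; rewrite /cent /=.
- by rewrite -mulA hz !mulA => /mulIg.
- by move=> e; rewrite -mulA hz !mulA e.
Qed.

Lemma lcosetP x H y : lcoset mul x H y <-> H (mul (inv x) y).
Proof.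
split; first by case=> h Hh <-; rewrite mulKg.
by move=> Hy; exists (mul (inv x) y) => //; rewrite mulKVg.
Qed.

Lemma lcoset_self H y : is_subgroup mul inv one H -> lcoset mul y H y.
Proof. by case=> H1 _ _; apply/lcosetP; rewrite mulVg. Qed.

Lemma lcoset_eq H x y : is_subgroup mul inv one H -> lcoset mul x H y ->
  lcoset mul x H = lcoset mul y H.
Proof.
move=> [H1 HM HV] /lcosetP hy; apply/seteqP; split=> w /lcosetP hw; apply/lcosetP.
- have := HM _ _ (HV _ hy) hw.
  by rewrite invM invK -mulA mulKVg.
- have := HM _ _ hy hw.
  by rewrite mulA mulgK.
Qed.

Lemma lcoset1 H : lcoset mul one H = H.
Proof.
have i1 : inv one = one by rewrite -[inv one]mulg1 mulVg.
apply/seteqP; split=> w.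
- by move/lcosetP; rewrite i1 mul1g.
- by move=> hw; apply/lcosetP; rewrite i1 mul1g.
Qed.

Definition ind (A : set G) : G -> R := fun y => if `[< A y >] then 1 else 0.

Lemma ind_lcoset x H y : ind (lcoset mul x H) y = ind H (mul (inv x) y).
Proof.
rewrite /ind; case: (asboolP (lcoset mul x H y)) => [/lcosetP h|h].
  by rewrite asboolT.
by rewrite asboolF // => /lcosetP.
Qed.

Lemma ind01 A y : 0 <= ind A y <= 1.
Proof. by rewrite /ind; case: asboolP => _; rewrite ?lexx ?ler01. Qed.

Lemma sum_cosets H (cs : seq (set G)) (F : set G -> R) y :
  is_subgroup mul inv one H -> uniq cs -> (forall c, c \in cs -> lcosets mul H c) ->
  \sum_(c <- cs) F c * ind c y =
    if lcoset mul y H \in cs then F (lcoset mul y H) else 0.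
Proof.
move=> sH ucs hcs.
have e : forall c, c \in cs ->
    F c * ind c y = if c == lcoset mul y H then F (lcoset mul y H) else 0.
  move=> c /hcs [x _ <-]; rewrite /ind.
  case: asboolP => [h|h].
    by rewrite (lcoset_eq sH h) eqxx mulr1.
  case: eqP => [e|]; last by rewrite mulr0.
  by exfalso; apply: h; rewrite e; apply: lcoset_self.
rewrite (eq_big_seq _ e).
case: ifP => hin.
  rewrite (bigD1_seq (lcoset mul y H) hin ucs) /= eqxx big1 ?addr0 //.
  by move=> c /negbTE ->.
by rewrite big1_seq // => c /andP[_ hc]; case: eqP => // ec; rewrite -ec hc in hin.
Qed.


Lemma sum_cst_seq (T : Type) (s : seq T) (t : R) : \sum_(c <- s) t = (size s)%:R * t.
Proof.
elim: s => [|a s IH]; first by rewrite big_nil mul0r.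
by rewrite big_cons IH /= -addn1 natrD mulrDl mul1r addrC.
Qed.

Lemma bnd_ind A : Defs.bounded_fun (ind A).
Proof. by exists 1 => y; have /andP[h0 h1] := ind01 A y; rewrite ger0_norm. Qed.

Lemma bnd_cst (c : R) : Defs.bounded_fun (fun _ : G => c).
Proof. by exists `|c|. Qed.

Lemma bnd_lin (f g : G -> R) a b : Defs.bounded_fun f -> Defs.bounded_fun g ->
  Defs.bounded_fun (fun x => a * f x + b * g x).
Proof.
move=> [C hC] [D hD]; exists (`|a| * C + `|b| * D) => x.
rewrite (le_trans (ler_normD _ _)) // !normrM lerD // ler_wpM2l //.
Qed.

Lemma bnd_sum (T : Type) (s : seq T) (F : T -> G -> R) :
  (forall i, Defs.bounded_fun (F i)) -> Defs.bounded_fun (fun x => \sum_(i <- s) F i x).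
Proof.
move=> hF; elim: s => [|a s IH].
  by exists 0 => x; rewrite big_nil normr0.
have := bnd_lin 1 1 (hF a) IH.
by congr Defs.bounded_fun; apply/funext => x; rewrite big_cons !mul1r.
Qed.

Lemma bnd_sc (a : R) A : Defs.bounded_fun (fun y => a * ind A y).
Proof.
have := bnd_lin a 0 (bnd_ind A) (bnd_ind A).
by congr Defs.bounded_fun; apply/funext => y; rewrite mul0r addr0.
Qed.

Section Mean.
Variable m : (G -> R) -> R.
Hypothesis hm : is_left_invariant_mean mul m.

Lemma mlin (f g : G -> R) a b : Defs.bounded_fun f -> Defs.bounded_fun g ->
  m (fun x => a * f x + b * g x) = a * m f + b * m g.
Proof. by case: hm => h _ _ _; apply: h. Qed.

Lemma mpos f : Defs.bounded_fun f -> (forall x, 0 <= f x) -> 0 <= m f.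
Proof. by case: hm => _ h _ _; apply: h. Qed.

Lemma m1 : m (fun _ => 1) = 1.
Proof. by case: hm. Qed.

Lemma minv f g : Defs.bounded_fun f -> m (fun x => f (mul g x)) = m f.
Proof. by case: hm => _ _ _ h; apply: h. Qed.

Lemma mD f g : Defs.bounded_fun f -> Defs.bounded_fun g -> m (fun x => f x + g x) = m f + m g.
Proof.
move=> bf bg; have := mlin 1 1 bf bg; rewrite !mul1r => <-.
by congr m; apply/funext => x; rewrite !mul1r.
Qed.

Lemma mZ f a : Defs.bounded_fun f -> m (fun x => a * f x) = a * m f.
Proof.
move=> bf; have := mlin a 0 bf bf; rewrite mul0r addr0 => <-.
by congr m; apply/funext => x; rewrite mul0r addr0.
Qed.

Lemma mcst c : m (fun _ => c) = c.
Proof.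
by have := mZ c (bnd_cst 1); rewrite m1 !mulr1.
Qed.

Lemma mle f g : Defs.bounded_fun f -> Defs.bounded_fun g -> (forall x, f x <= g x) -> m f <= m g.
Proof.
move=> bf bg hfg; rewrite -subr_ge0.
have := mlin 1 (-1) bg bf; rewrite mul1r mulN1r => <-.
apply: mpos; first exact: bnd_lin.
by move=> x; rewrite mul1r mulN1r subr_ge0.
Qed.

Lemma msum (T : Type) (s : seq T) (F : T -> G -> R) :
  (forall i, Defs.bounded_fun (F i)) ->
  m (fun x => \sum_(i <- s) F i x) = \sum_(i <- s) m (F i).
Proof.
move=> hF; elim: s => [|a s IH].
  transitivity (m (fun _ => 0)); last by rewrite mcst big_nil.
  by congr m; apply/funext => x; rewrite big_nil.
rewrite big_cons -IH -mD //; last exact: bnd_sum.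
by congr m; apply/funext => x; rewrite big_cons.
Qed.

Lemma mtrans x H : m (ind (lcoset mul x H)) = m (ind H).
Proof.
rewrite -(minv (inv x) (bnd_ind H)); congr m; apply/funext => y.
exact: ind_lcoset.
Qed.

Lemma mind01 A : 0 <= m (ind A) <= 1.
Proof.
apply/andP; split; first by apply: mpos; [exact: bnd_ind| move=> y; case/andP: (ind01 A y)].
rewrite -m1; apply: mle; [exact: bnd_ind|exact: bnd_cst|].
by move=> y; case/andP: (ind01 A y).
Qed.

Lemma mean_subgroup H : is_subgroup mul inv one H -> m (ind H) = inv_index mul R H.
Proof.
move=> sH; rewrite /inv_index; case: asboolP => fin.
  set cs := fset_set (lcosets mul H).
  have hcs : forall c, c \in (cs : seq _) -> lcosets mul H c.
    by move=> c; rewrite /cs in_fset_set // => /set_mem.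
  have hin : forall y, lcoset mul y H \in (cs : seq _).
    by move=> y; rewrite /cs in_fset_set //; apply/mem_set; exists y.
  have e1 : (fun _ : G => 1 : R) = (fun y => \sum_(c <- (cs : seq _)) 1 * ind c y).
    by apply/funext => y; rewrite (sum_cosets _ _ sH (fset_uniq _) hcs) hin.
  have := m1; rewrite e1 msum; last by move=> c; exact: bnd_sc.
  have e2 : forall c, c \in (cs : seq _) -> m (fun y => 1 * ind c y) = m (ind H).
    move=> c /hcs [x _ <-]; rewrite -(mtrans x); congr m; apply/funext => y.
    by rewrite mul1r.
  rewrite (eq_big_seq _ e2) sum_cst_seq => hk.
  have k0 : (size cs)%:R != 0 :> R.
    by apply/eqP => k0; move: hk; rewrite k0 mul0r => /eqP; rewrite eq_sym oner_eq0.
  by apply: (mulfI k0); rewrite hk mulfV.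
apply/eqP; rewrite eq_le; case/andP: (mind01 H) => -> _; rewrite andbT.
rewrite leNgt; apply/negP => t0.
set t := m (ind H) in t0.
have ht : 0 <= t^-1 by rewrite invr_ge0 ltW.
have [B BH hB] := infinite_set_fset (Num.Def.archi_bound t^-1) fin.
have hBs : forall c, c \in (B : seq _) -> lcosets mul H c by move=> c cB; apply: BH.
have le1 : forall y, \sum_(c <- (B : seq _)) 1 * ind c y <= 1.
  by move=> y; rewrite (sum_cosets _ _ sH (fset_uniq _) hBs); case: ifP => _; rewrite ?lexx ?ler01.
have := @mle (fun x => \sum_(c <- (B : seq _)) 1 * ind c x) (fun _ => 1)
  (bnd_sum _ (fun c => bnd_sc 1 c)) (bnd_cst 1) le1.
rewrite mcst msum; last by move=> c; exact: bnd_sc.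
have e4 : forall c, c \in (B : seq _) -> m (fun y => 1 * ind c y) = t.
  move=> c /hBs [x _ <-]; rewrite /t -(mtrans x); congr m; apply/funext => y.
  by rewrite mul1r.
rewrite (eq_big_seq _ e4) sum_cst_seq => hle.
have := archi_boundP ht.
rewrite -(ler_nat R) in hB.
move=> hlt.
have : t^-1 < (size B)%:R by apply: lt_le_trans hlt hB.
rewrite -(ltr_pM2r t0) mulVf ?gt_eqF //.
by rewrite ltNge hle.
Qed.

End Mean.

Definition fidx x : R := inv_index mul R (cent x).

Lemma ii_ge0 H : 0 <= inv_index mul R H.
Proof. by rewrite /inv_index; case: asboolP => _ //; rewrite invr_ge0. Qed.

Lemma ii_le1 H : inv_index mul R H <= 1.
Proof.
rewrite /inv_index; case: asboolP => _ //.
case: (#|` _|) => [|k]; first by rewrite invr0.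
by rewrite invf_le1 // ?ler1n // ltr0n.
Qed.

Lemma fidx_bnd : Defs.bounded_fun fidx.
Proof. by exists 1 => x; rewrite ger0_norm ?ii_ge0 ?ii_le1. Qed.

Lemma fidx_ctr x : ~ ctr x -> fidx x <= 1 / 2.
Proof.
move=> nx.
have [y ny] : exists y, ~ cent x y.
  by apply/existsNP => hy; apply: nx => y; exact: (hy y).
rewrite /fidx /inv_index; case: asboolP => fin; last by rewrite divr_ge0 ?ler01 ?ler0n.
set cs := fset_set (lcosets mul (cent x)).
have h1 : cent x \in cs.
  by rewrite /cs in_fset_set //; apply/mem_set; exists one => //; rewrite lcoset1.
have h2 : lcoset mul y (cent x) \in cs.
  by rewrite /cs in_fset_set //; apply/mem_set; exists y.
have ne : cent x != lcoset mul y (cent x).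
  apply/eqP => e; apply: ny; rewrite e; apply: lcoset_self; exact: cent_sub.
have : (2 <= #|` cs|)%N.
  have sub : ([fset cent x; lcoset mul y (cent x)] `<=` cs)%fset.
    by apply/fsubsetP => z; rewrite !inE => /orP[/eqP->|/eqP->].
  by have := fsubset_leq_card sub; rewrite cardfs2 ne.
move=> h; rewrite div1r lef_pV2 ?posrE ?ltr0n //; first by rewrite ler_nat.
by apply: leq_trans h.
Qed.


Lemma dc_fidx m : is_left_invariant_mean mul m -> dc_mean mul m = m fidx.
Proof.
move=> hm; rewrite /dc_mean; congr m; apply/funext => x.
exact: (mean_subgroup hm (cent_sub x)).
Qed.

Lemma subI A B : is_subgroup mul inv one A -> is_subgroup mul inv one B ->
  is_subgroup mul inv one (A `&` B).
Proof.
move=> [A1 AM AV] [B1 BM BV]; split.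
- by split.
- by move=> x y [? ?] [? ?]; split; [apply: AM|apply: BM].
- by move=> x [? ?]; split; [apply: AV|apply: BV].
Qed.

Lemma ind_le A B y : A `<=` B -> ind A y <= ind B y.
Proof.
move=> AB; rewrite /ind; case: (asboolP (A y)) => ha.
  by rewrite asboolT ?lexx //; apply: AB.
by case: asboolP => _; rewrite ?ler01 ?lexx.
Qed.

Lemma indI A B y : ind (A `&` B) y = ind B y * ind A y.
Proof.
rewrite /ind; case: (asboolP (A y)) => ha; case: (asboolP (B y)) => hb.
- by rewrite asboolT ?mulr1.
- by rewrite asboolF ?mul0r // => -[].
- by rewrite asboolF ?mulr0 // => -[].
- by rewrite asboolF ?mulr0 // => -[].
Qed.

Lemma cosetI A B x g : is_subgroup mul inv one A -> is_subgroup mul inv one B ->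
  (lcoset mul x A `&` B) g -> lcoset mul x A `&` B = lcoset mul g (A `&` B).
Proof.
move=> sA sB [hx hB].
rewrite (lcoset_eq sA hx).
have eB : B = lcoset mul g B.
  by rewrite -{1}(lcoset1 B); apply: lcoset_eq => //; rewrite lcoset1.
rewrite {1}eB; apply/seteqP; split => w.
- by move=> [/lcosetP h1 /lcosetP h2]; apply/lcosetP.
- by move=> /lcosetP [h1 h2]; split; apply/lcosetP.
Qed.

Lemma le_sum_mem (T : eqType) (s : seq T) (F : T -> R) h :
  h \in s -> (forall i, 0 <= F i) -> F h <= \sum_(i <- s) F i.
Proof.
move=> hs F0; elim: s hs => [//|a s IH]; rewrite in_cons big_cons.
case/orP => [/eqP ->|hs]; first by rewrite lerDl sumr_ge0.
by rewrite (le_trans (IH hs)) // lerDr.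
Qed.

Lemma prod_le m A B : is_left_invariant_mean mul m ->
  is_subgroup mul inv one A -> is_subgroup mul inv one B ->
  m (ind A) * m (ind B) <= m (ind (A `&` B)).
Proof.
move=> hm sA sB.
have hAB0 : 0 <= m (ind (A `&` B)) by case/andP: (mind01 hm (A `&` B)).
rewrite (mean_subgroup hm sA) /inv_index; case: asboolP => fin; last by rewrite mul0r.
set cs := fset_set (lcosets mul A).
have hcs : forall c, c \in (cs : seq _) -> lcosets mul A c.
  by move=> c; rewrite /cs in_fset_set // => /set_mem.
have hin : forall y, lcoset mul y A \in (cs : seq _).
  by move=> y; rewrite /cs in_fset_set //; apply/mem_set; exists y.
have e1 : ind B = (fun y => \sum_(c <- (cs : seq _)) ind (c `&` B) y).
  apply/funext => y.
  under eq_bigr do rewrite indI.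
  by rewrite (sum_cosets (fun _ => ind B y) _ sA (fset_uniq _) hcs) hin.
have hle : m (ind B) <= (size cs)%:R * m (ind (A `&` B)).
  rewrite e1 msum //; last by move=> c; exact: bnd_ind.
  rewrite -sum_cst_seq [X in X <= _]big_seq [X in _ <= X]big_seq.
  apply: ler_sum => c /hcs [x _ <-].
  have [[g hg]|ne] := pselect (exists g, (lcoset mul x A `&` B) g).
    by rewrite (cosetI sA sB hg) mtrans.
  have -> : ind (lcoset mul x A `&` B) = (fun _ => 0).
    apply/funext => y; rewrite /ind asboolF // => hy; apply: ne; by exists y.
  by rewrite mcst.
have k0 : 0 < (size cs)%:R :> R.
  rewrite ltr0n lt0n size_eq0; apply/eqP => e; have := hin one; by rewrite e.
rewrite -(ler_pM2l k0) mulrA mulfV ?gt_eqF // mul1r //.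
Qed.

Lemma fidx_mean m x : is_left_invariant_mean mul m -> fidx x = m (ind (cent x)).
Proof. by move=> hm; rewrite (mean_subgroup hm (cent_sub x)). Qed.

Lemma part1 m m' : is_left_invariant_mean mul m -> is_left_invariant_mean mul m' ->
  m fidx = 0 -> m' fidx = 0.
Proof.
move=> hm hm' h0.
have f0 : 0 <= m' fidx by apply: (mpos hm' fidx_bnd) => x; exact: ii_ge0.
apply/eqP; rewrite eq_le f0 andbT leNgt; apply/negP => apos.
set a := m' fidx in apos.
pose eps := a / 2.
have eps0 : 0 < eps by rewrite divr_gt0.
pose X := [set x | eps <= fidx x].
have hX : eps <= m' (ind X).
  have le : forall x, fidx x <= 1 * ind X x + eps * 1.
    move=> x; rewrite mul1r mulr1 /ind; case: asboolP => hx.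
      by rewrite (le_trans (ii_le1 _)) // lerDl ltW.
    by rewrite add0r; apply: ltW; rewrite ltNge; apply/negP => hh; apply: hx.
  have := mle hm' fidx_bnd (bnd_lin 1 eps (bnd_ind X) (bnd_cst 1)) le.
  rewrite (mlin hm' 1 eps (bnd_ind X) (bnd_cst 1)) (m1 hm') mul1r mulr1.
  rewrite -/a /eps => h; lra.
have hXX : forall x x', X x -> X x' -> eps * eps <= fidx (mul x' (inv x)).
  move=> x x' hx hx'.
  apply: (le_trans (ler_pM (ltW eps0) (ltW eps0) hx hx')).
  rewrite !(fidx_mean _ hm').
  apply: (le_trans (prod_le hm' (cent_sub x) (cent_sub x'))).
  apply: (mle hm' (bnd_ind _) (bnd_ind _)) => y; apply: ind_le => {}y [hy hy'].
  have [_ CM CV] := cent_sub y.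
  have := CM _ _ (esym hy') (CV _ (esym hy)).
  by rewrite /cent /= => ->.
pose Y := [set y | eps * eps <= fidx y].
pose D (gs : seq G) := forall y, \sum_(h <- gs) ind (lcoset mul h X) y <= 1.
have Dbound : forall gs, D gs -> (size gs)%:R * eps <= 1.
  move=> gs Dgs.
  have := mle hm' (bnd_sum gs (fun h => bnd_ind (lcoset mul h X))) (bnd_cst 1) Dgs.
  rewrite (mcst hm') (msum hm'); last by move=> h; exact: bnd_ind.
  under eq_bigr do rewrite (mtrans hm').
  rewrite sum_cst_seq => h; apply: le_trans h.
  by rewrite ler_wpM2l.
have ieps : 0 <= eps^-1 by rewrite invr_ge0 ltW.
pose N := Num.Def.archi_bound eps^-1.
pose P := fun n => `[< exists gs, size gs = n /\ D gs >].
have hex : exists n, P n.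
  exists 0%N; apply/asboolP; exists [::]; split => // y; by rewrite big_nil ler01.
have hbd : forall n, P n -> (n <= N)%N.
  move=> n /asboolP [gs [<- Dgs]].
  have := Dbound gs Dgs; rewrite -ler_pdivlMr // div1r => h.
  rewrite -(ler_nat R); apply: ltW; apply: le_lt_trans h _.
  exact: archi_boundP.
case: (ex_maxnP hex hbd) => n /asboolP [gs [sz Dgs]] hmax.
have cover : forall g, exists2 h, h \in gs & Y (mul (inv h) g).
  move=> g.
  have nD : ~ D (g :: gs).
    move=> Dg; suff : (n.+1 <= n)%N by rewrite ltnn.
    apply: hmax.
    by apply/asboolP; exists (g :: gs); rewrite /= sz.
  have [y hy] : exists y, 1 < \sum_(h <- g :: gs) ind (lcoset mul h X) y.
    apply/not_existsP => hy; apply: nD => y; have := hy y.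
    by move/negP; rewrite -leNgt.
  rewrite big_cons in hy.
  have hg : lcoset mul g X y.
    apply: contrapT => hg; move: hy; rewrite /ind asboolF // add0r.
    by rewrite ltNge Dgs.
  have [h hh hyh] : exists2 h, h \in gs & lcoset mul h X y.
    apply: contrapT => nh; move: hy; rewrite big1_seq ?addr0.
      by rewrite ltNge; case/andP: (ind01 (lcoset mul g X) y) => _ ->.
    move=> h' /= hin; rewrite /ind asboolF // => hh; apply: nh; by exists h'.
  exists h => //.
  move/lcosetP: hg => hg; move/lcosetP: hyh => hyh.
  have := hXX _ _ hg hyh.
  by rewrite invM invK mulA mulgK.
have h1 : 1 <= (size gs)%:R * m (ind Y).
  have := mle hm (bnd_cst 1) (bnd_sum gs (fun h => bnd_ind (lcoset mul h Y))).
  rewrite (mcst hm) (msum hm); last by move=> h; exact: bnd_ind.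
  under eq_bigr do rewrite (mtrans hm).
  rewrite sum_cst_seq; apply => g.
  have [h hin hY] := cover g.
  apply: le_trans (@le_sum_mem _ gs (fun i => ind (lcoset mul i Y) g) h hin _); last first.
    by move=> i; case/andP: (ind01 (lcoset mul i Y) g).
  by rewrite /ind asboolT //; apply/lcosetP.
have h2 : eps * eps * m (ind Y) <= m fidx.
  rewrite -(mZ hm); last exact: bnd_ind.
  apply: (mle hm (bnd_sc _ _) fidx_bnd) => x; rewrite /ind; case: asboolP => hx.
    by rewrite mulr1.
  by rewrite mulr0 ii_ge0.
move: h2; rewrite h0 => h2.
have mY0 : m (ind Y) <= 0.
  by rewrite -(pmulr_rle0 _ (mulr_gt0 eps0 eps0)).
have mY : m (ind Y) = 0 by apply/eqP; rewrite eq_le mY0; case/andP: (mind01 hm Y).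
by move: h1; rewrite mY mulr0 ler10.
Qed.

Definition rep (c : set G) : G := xget one [set x | c = lcoset mul x ctr].

Lemma rep_spec c : lcosets mul ctr c -> c = lcoset mul (rep c) ctr.
Proof.
case=> x _ <-; rewrite /rep.
by have := @xgetPex _ one [set x' | lcoset mul x ctr = lcoset mul x' ctr] (ex_intro _ x erefl).
Qed.

Definition ccs : seq (set G) := fset_set (lcosets mul ctr).

Definition beta : R := \sum_(c <- ccs) fidx (rep c) * inv_index mul R ctr.

Lemma ccs_in c : c \in ccs -> lcosets mul ctr c.
Proof.
rewrite /ccs; case: (pselect (finite_set (lcosets mul ctr))) => fin.
  by rewrite in_fset_set // => /set_mem.
by rewrite /fset_set; case: pselect.
Qed.

Lemma ccs_uniq : uniq ccs.
Proof. exact: fset_uniq. Qed.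

Lemma fidx_decomp : finite_set (lcosets mul ctr) ->
  fidx = fun y => \sum_(c <- ccs) fidx (rep c) * ind c y.
Proof.
move=> fin; apply/funext => y.
rewrite (sum_cosets (fun c => fidx (rep c)) _ ctr_sub ccs_uniq ccs_in).
have -> : lcoset mul y ctr \in ccs.
  by rewrite /ccs in_fset_set //; apply/mem_set; exists y.
have hc : lcosets mul ctr (lcoset mul y ctr) by exists y.
have := rep_spec hc; set r := rep _ => e.
have : lcoset mul r ctr y by rewrite -e; apply: lcoset_self; exact: ctr_sub.
move/lcosetP => hz.
by rewrite -{1}(mulKVg r y) /fidx centM.
Qed.

Lemma mean_value m : is_left_invariant_mean mul m -> finite_set (lcosets mul ctr) ->
  m fidx = beta.
Proof.
move=> hm fin; rewrite {1}(fidx_decomp fin) (msum hm); last by move=> c; exact: bnd_sc.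
rewrite /beta big_seq [RHS]big_seq; apply: eq_bigr => c /ccs_in hc.
rewrite (mZ hm); last exact: bnd_ind.
by rewrite (rep_spec hc) (mtrans hm) (mean_subgroup hm ctr_sub) -(rep_spec hc).
Qed.

Lemma fidx_half x : fidx x <= 1 / 2 * 1 + 1 / 2 * ind ctr x.
Proof.
rewrite /ind; case: asboolP => hx.
  by apply: (le_trans (ii_le1 _)); lra.
by rewrite mulr0 addr0 mulr1 fidx_ctr.
Qed.

Lemma ii_pos_fin H : 0 < inv_index mul R H -> finite_set (lcosets mul H).
Proof.
rewrite /inv_index; case: asboolP => // _; by rewrite ltxx.
Qed.

Lemma ctr_fin_of_mean m : is_left_invariant_mean mul m -> 1 / 2 < m fidx ->
  finite_set (lcosets mul ctr).
Proof.
move=> hm hlt; apply: ii_pos_fin.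
have := mle hm fidx_bnd (bnd_lin (1/2) (1/2) (bnd_cst 1) (bnd_ind ctr)) fidx_half.
rewrite (mlin hm _ _ (bnd_cst 1) (bnd_ind ctr)) (m1 hm) (mean_subgroup hm ctr_sub).
move=> h; have := lt_le_trans hlt h; lra.
Qed.


Lemma esumZ (T : choiceType) (I : set T) (a : T -> \bar R) (c : R) : 0 <= c ->
  (forall i, I i -> (0 <= a i)%E) ->
  (\esum_(i in I) (c%:E * a i) = c%:E * \esum_(i in I) a i)%E.
Proof.
move=> c0 a0; rewrite /esum -ereal_supZl //; last first.
  apply/set0P; exists (\sum_(x \in set0) a x)%E; exists set0; last by [].
  exact: fsets_set0.
congr ereal_sup; apply/seteqP; split => z /=.
- move=> [A [finA AI] <-]; exists (\sum_(x \in A) a x)%E; first by exists A.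
  rewrite !fsbig_finite // !big_seq ge0_sume_distrr // => x.
  by rewrite in_fset_set // => /set_mem /AI; exact: a0.
- move=> [_ [A [finA AI] <-] <-]; exists A => //.
  rewrite !fsbig_finite // !big_seq ge0_sume_distrr // => x.
  by rewrite in_fset_set // => /set_mem /AI; exact: a0.
Qed.

Section Seq.
Variable p : G -> R.
Hypothesis hp : is_prob p.

Local Open Scope ereal_scope.

Definition Ex (h : G -> R) : \bar R := \esum_(x in [set: G]) (p x * h x)%:E.

Lemma p_ge0 x : (0 <= p x)%R.
Proof. by case: hp. Qed.

Lemma Ex_le h h' : (forall x, 0 <= h x <= h' x)%R -> Ex h <= Ex h'.
Proof.
move=> hh; apply: le_esum => x _; rewrite lee_fin; apply: ler_wpM2l; first exact: p_ge0.
by case/andP: (hh x).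
Qed.

Lemma Ex_ge0 h : (forall x, 0 <= h x)%R -> 0 <= Ex h.
Proof. by move=> h0; apply: esum_ge0 => x _; rewrite lee_fin mulr_ge0 // p_ge0. Qed.

Lemma Ex_cst c : (0 <= c)%R -> Ex (fun _ => c) = c%:E.
Proof.
move=> c0; rewrite /Ex.
under eq_esum do rewrite mulrC EFinM.
by rewrite esumZ // ?(proj2 hp) ?mule1 // => x _; rewrite lee_fin p_ge0.
Qed.

Lemma ExZ c h : (0 <= c)%R -> (forall x, 0 <= h x)%R ->
  Ex (fun x => c * h x)%R = c%:E * Ex h.
Proof.
move=> c0 h0; rewrite /Ex -esumZ //; last by move=> x _; rewrite lee_fin mulr_ge0 // p_ge0.
by apply: eq_esum => x _; rewrite -EFinM mulrCA.
Qed.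

Lemma ExD h1 h2 : (forall x, 0 <= h1 x)%R -> (forall x, 0 <= h2 x)%R ->
  Ex (fun x => h1 x + h2 x)%R = Ex h1 + Ex h2.
Proof.
move=> h10 h20; rewrite /Ex -esumD.
- by apply: eq_esum => x _; rewrite mulrDr EFinD.
- by move=> x _; rewrite lee_fin mulr_ge0 // p_ge0.
- by move=> x _; rewrite lee_fin mulr_ge0 // p_ge0.
Qed.

Lemma Ex_sum (T : choiceType) (s : seq T) (F : T -> G -> R) :
  (forall i x, 0 <= F i x)%R ->
  Ex (fun x => \sum_(i <- s) F i x)%R = \sum_(i <- s) Ex (F i).
Proof.
move=> F0; rewrite /Ex.
under eq_esum do rewrite mulr_sumr -sumEFin.
rewrite esum_sum //.
by move=> x i _ _; rewrite lee_fin mulr_ge0 // p_ge0.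
Qed.

Lemma Ex_ind A : Ex (ind A) = pmeas p A.
Proof.
rewrite /Ex /pmeas [RHS]esum_mkcond; apply: eq_esum => x _.
rewrite /ind; case: asboolP => hx.
  by rewrite mulr1 mem_set.
by rewrite mulr0 memNset.
Qed.

Lemma pm_ge0 A : 0 <= pmeas p A.
Proof. by rewrite -Ex_ind; apply: Ex_ge0 => x; case/andP: (ind01 A x). Qed.

Lemma pm_le1 A : pmeas p A <= 1.
Proof.
rewrite -Ex_ind -(Ex_cst ler01); apply: Ex_le => x; exact: ind01.
Qed.

Lemma pm_fin A : pmeas p A \is a fin_num.
Proof.
by rewrite ge0_fin_numE ?pm_ge0 // (le_lt_trans (pm_le1 A)) // ltry.
Qed.

Lemma Ex_fin h c : (forall x, 0 <= h x <= c)%R -> Ex h \is a fin_num.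
Proof.
move=> hh; have c0 : (0 <= c)%R by case/andP: (hh one) => /le_trans; apply.
rewrite ge0_fin_numE; last by apply: Ex_ge0 => x; case/andP: (hh x).
by rewrite (le_lt_trans (Ex_le (h' := fun _ => c) hh)) // Ex_cst // ltry.
Qed.

End Seq.

Lemma comm_Ex (M : nat -> G -> R) n : is_prob (M n) ->
  comm_mass mul M n = Ex (M n) (fun x => fine (pmeas (M n) (cent x))).
Proof.
move=> hp; rewrite /comm_mass.
have -> : [set z : G * G | mul z.1 z.2 = mul z.2 z.1] = [set: G] `*`` (fun x => cent x).
  by apply/seteqP; split => z /=; [move=> h; split|case].
rewrite -(esum_esum (a := fun x y => (M n x * M n y)%:E)); last by move=> x y _ _; rewrite lee_fin mulr_ge0 // (p_ge0 hp).
rewrite /Ex; congr esum; apply/funext => x.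
rewrite EFinM fineK ?(pm_fin hp) // /pmeas -esumZ ?(p_ge0 hp) //;
  try by congr esum; apply/funext => y; rewrite EFinM.
all: try by move=> y _; rewrite lee_fin (p_ge0 hp).
Qed.

Lemma limn_esup_le_ev (u : (\bar R)^nat) (c : \bar R) :
  (\forall n \near \oo, (u n <= c)%E) -> (limn_esup u <= c)%E.
Proof.
move=> [N _ hN]; rewrite limn_esup_lim; apply: lime_le; first exact: is_cvg_esups.
exists N => // n /= hn; apply: ge_ereal_sup => _ [k /= hk <-]; apply: hN.
by rewrite /= (leq_trans hn hk).
Qed.

Definition good (p : G -> R) (e : R) := forall x H, is_subgroup mul inv one H ->
  `|fine (pmeas p (lcoset mul x H)) - inv_index mul R H| < e.

Lemma Ex_fidx_fin (p : G -> R) : is_prob p -> Ex p fidx \is a fin_num.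
Proof. by move=> hp; apply: (Ex_fin hp (c := 1)) => x; rewrite ii_ge0 ii_le1. Qed.

Lemma pm01 (p : G -> R) (A : set G) : is_prob p -> (0 <= fine (pmeas p A) <= 1)%R.
Proof.
move=> hp; rewrite -lee_fin -[X in _ && X]lee_fin fineK ?(pm_fin hp) //.
by rewrite (pm_ge0 hp) (pm_le1 hp).
Qed.

Lemma comm_fin (M : nat -> G -> R) n : is_prob (M n) -> comm_mass mul M n \is a fin_num.
Proof.
move=> hp; rewrite (comm_Ex hp); apply: (Ex_fin hp (c := 1)) => x.
exact: pm01.
Qed.

Lemma G1 (M : nat -> G -> R) n e : is_prob (M n) -> good (M n) e ->
  (`|fine (comm_mass mul M n) - fine (Ex (M n) fidx)| <= e)%R.
Proof.
move=> hp hg.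
have e0 : (0 <= e)%R by apply: ltW; apply: le_lt_trans (hg one ctr ctr_sub); rewrite normr_ge0.
have hx : forall x, (`|fine (pmeas (M n) (cent x)) - fidx x| < e)%R.
  by move=> x; have := hg one (cent x) (cent_sub x); rewrite lcoset1.
have fc := comm_fin hp; have ff := Ex_fidx_fin hp.
have le1 : (comm_mass mul M n <= Ex (M n) fidx + e%:E)%E.
  rewrite (comm_Ex hp) -(Ex_cst hp e0) -(ExD hp); last 2 first.
  - by move=> x; exact: ii_ge0.
  - by move=> _.
  apply: (Ex_le hp) => x; case/andP: (pm01 (cent x) hp) => -> _ /=.
  by have := hx x; rewrite ltr_norml => /andP[h1 h2]; lra.
have le2 : (Ex (M n) fidx <= comm_mass mul M n + e%:E)%E.
  rewrite (comm_Ex hp) -(Ex_cst hp e0) -(ExD hp); last 2 first.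
  - by move=> x; case/andP: (pm01 (cent x) hp).
  - by move=> _.
  apply: (Ex_le hp) => x; rewrite ii_ge0 /=.
  by have := hx x; rewrite ltr_norml => /andP[h1 h2]; lra.
move: le1 le2; rewrite -(fineK fc) -(fineK ff) -!EFinD !lee_fin !fineK //.
by move=> h1 h2; rewrite ler_norml; apply/andP; split; lra.
Qed.


Lemma G2 (p : G -> R) e : is_prob p -> finite_set (lcosets mul ctr) -> good p e ->
  (`|fine (Ex p fidx) - beta| <= (size ccs)%:R * e)%R.
Proof.
move=> hp fin hg.
have eE : Ex p fidx = (\sum_(c <- ccs) fidx (rep c) * fine (pmeas p c))%:E.
  rewrite {1}(fidx_decomp fin) (Ex_sum hp); last first.
    by move=> c x; rewrite mulr_ge0 ?ii_ge0 //; case/andP: (ind01 c x).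
  rewrite -sumEFin; apply: eq_bigr => c _.
  rewrite (ExZ hp) ?ii_ge0 //; last by move=> x; case/andP: (ind01 c x).
  by rewrite Ex_ind EFinM fineK // (pm_fin hp).
rewrite eE /= /beta -sumrB -sum_cst_seq.
apply: (le_trans (ler_norm_sum _ _ _)).
rewrite big_seq [X in _ <= X]big_seq; apply: ler_sum => c /ccs_in hc.
rewrite -mulrBr normrM ger0_norm ?ii_ge0 //.
rewrite -[X in _ <= X]mul1r; apply: ler_pM; rewrite ?ii_ge0 ?normr_ge0 ?ii_le1 //.
by rewrite {1}(rep_spec hc); apply: ltW; apply: hg; exact: ctr_sub.
Qed.

Lemma G3 (p : G -> R) : is_prob p ->
  (fine (Ex p fidx) <= 1 / 2 + 1 / 2 * fine (pmeas p ctr))%R.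
Proof.
move=> hp.
have h0 : (0 <= 1 / 2 :> R)%R by rewrite divr_ge0 ?ler01 ?ler0n.
have := Ex_le hp (h' := fun x => 1 / 2 * 1 + 1 / 2 * ind ctr x)%R
  (fun x => introT andP (conj (ii_ge0 _) (fidx_half x))).
rewrite (ExD hp); last 2 first.
- by move=> x; rewrite mulr1.
- by move=> x; rewrite mulr_ge0 //; case/andP: (ind01 ctr x).
rewrite (Ex_cst hp) ?mulr1 // (ExZ hp) //; last by move=> x; case/andP: (ind01 ctr x).
rewrite Ex_ind -(fineK (pm_fin hp ctr)) -(fineK (Ex_fidx_fin hp)) -EFinM -EFinD lee_fin.
by rewrite fineK // (Ex_fidx_fin hp).
Qed.

Lemma seq_conv (M : nat -> G -> R) : measures_index_uniformly mul inv one M ->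
  finite_set (lcosets mul ctr) ->
  (comm_mass mul M n @[n --> \oo] --> beta%:E)%E.
Proof.
move=> [hp hM] fin; apply: cvg_EFin.
  by apply: filterE => n; exact: comm_fin (hp n).
apply/cvgrPdist_le => eps eps0.
set k := (size ccs)%:R : R.
have k0 : (0 <= k)%R by rewrite ler0n.
pose e := eps / (k + 1).
have e0 : (0 < e)%R by rewrite divr_gt0 // ltr_wpDl.
apply: filterS (hM e e0) => n hg.
have h1 := G1 (hp n) hg.
have h2 := G2 (hp n) fin hg.
have ee : (eps = k * e + e)%R by rewrite /e -{2}(mul1r (eps / _)) -mulrDl mulrC mulfVK // gt_eqF // ltr_wpDl.
rewrite /= distrC.
apply: (le_trans (ler_distD (fine (Ex (M n) fidx)) _ _)).
by rewrite ee addrC lerD // distrC.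
Qed.


Lemma ctr_fin_of_seq (M : nat -> G -> R) alpha : measures_index_uniformly mul inv one M ->
  1 / 2 < alpha -> dc_seq mul M = alpha%:E -> finite_set (lcosets mul ctr).
Proof.
move=> [hp hM] ha hdc; apply: contrapT => nfin.
have ii0 : inv_index mul R ctr = 0 by rewrite /inv_index asboolF.
pose e := (alpha - 1 / 2) / 4.
have e0 : 0 < e by rewrite divr_gt0 // subr_gt0.
have : (limn_esup (comm_mass mul M) <= (1 / 2 + 2 * e)%:E)%E.
  apply: limn_esup_le_ev; apply: filterS (hM e e0) => n hg.
  have h1 := G1 (hp n) hg.
  have h3 := G3 (hp n).
  have h4 : `|fine (pmeas (M n) ctr)| < e.
    by have := hg one ctr ctr_sub; rewrite lcoset1 ii0 subr0.
  rewrite -(fineK (comm_fin (hp n))) lee_fin.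
  move: h1 h4; rewrite ler_norml ltr_norml => /andP[h1 h1'] /andP[h4 h4'].
  lra.
rewrite -/(dc_seq mul M) hdc lee_fin /e; lra.
Qed.

Lemma main :
  ((forall m : (G -> R) -> R, is_left_invariant_mean mul m -> dc_mean mul m = 0 ->
     forall m' : (G -> R) -> R, is_left_invariant_mean mul m' -> dc_mean mul m' = 0)
  /\
   (forall alpha : R, 1 / 2 < alpha ->
     ((exists m : (G -> R) -> R, is_left_invariant_mean mul m /\ dc_mean mul m = alpha)
      \/ (exists M : nat -> G -> R,
            measures_index_uniformly mul inv one M /\ dc_seq mul M = alpha%:E)) ->
     (forall m' : (G -> R) -> R, is_left_invariant_mean mul m' -> dc_mean mul m' = alpha)
     /\ (forall M' : nat -> G -> R, measures_index_uniformly mul inv one M' ->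
           dc_seq mul M' = alpha%:E /\ (comm_mass mul M' n @[n --> \oo] --> alpha%:E)%E))).
Proof.
split.
  move=> m hm h0 m' hm'; rewrite (dc_fidx hm'); apply: (part1 hm hm').
  by rewrite -(dc_fidx hm).
move=> alpha ha hyp.
have fin : finite_set (lcosets mul ctr).
  case: hyp => [[m [hm hdc]]|[M [hM hdc]]].
    by apply: (ctr_fin_of_mean hm); rewrite -(dc_fidx hm) hdc.
  exact: ctr_fin_of_seq hM ha hdc.
have hab : alpha = beta.
  case: hyp => [[m [hm hdc]]|[M [hM hdc]]].
    by rewrite -hdc (dc_fidx hm) (mean_value hm fin).
  have := (cvg_limn_einf_sup (seq_conv hM fin)).2.
  by rewrite -/(dc_seq mul M) hdc => -[].
rewrite hab; split.
  by move=> m' hm'; rewrite (dc_fidx hm') (mean_value hm' fin).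
move=> M' hM'; split; last exact: seq_conv.
exact: (cvg_limn_einf_sup (seq_conv hM' fin)).2.
Qed.

End Grp.


Unset Implicit Arguments.

Theorem corollary1p20 (R : realType) (G : choiceType)
  (mul : G -> G -> G) (inv : G -> G) (one : G) :
  is_group mul inv one -> countable [set: G] ->
  (* (1) *)
  ((forall m : (G -> R) -> R, is_left_invariant_mean mul m -> dc_mean mul m = 0 ->
     forall m' : (G -> R) -> R, is_left_invariant_mean mul m' -> dc_mean mul m' = 0)
  /\
  (* (2) *)
   (forall alpha : R, 1 / 2 < alpha ->
     ((exists m : (G -> R) -> R, is_left_invariant_mean mul m /\ dc_mean mul m = alpha)
      \/ (exists M : nat -> G -> R,
            measures_index_uniformly mul inv one M /\ dc_seq mul M = alpha%:E)) ->
     (forall m' : (G -> R) -> R, is_left_invariant_mean mul m' -> dc_mean mul m' = alpha)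
     /\ (forall M' : nat -> G -> R, measures_index_uniformly mul inv one M' ->
           dc_seq mul M' = alpha%:E /\ (comm_mass mul M' n @[n --> \oo] --> alpha%:E)%E))).
Proof.
move=> hG _; exact: (main R hG).
Qed.
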